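(* Let $\Gamma$ be a group and $\omega:\Gamma\times\Gamma\to\Gamma$ a group morphism. Then $R(\omega):K(\omega)\to K(\omega)^2$ is a group isomorphism satisfying $\mathrm{ev}_\epsilon=\omega\circ(\mathrm{ev}_\epsilon\times\mathrm{ev}_\epsilon)\circ R(\omega)$, and it is universal with this property: for every group $\widetilde K$, every group isomorphism $\widetilde R:\widetilde K\to\widetilde K^2$ and every group morphism $p:\widetilde K\to\Gamma$ with $p=\omega\circ(p\times p)\circ\widetilde R$, there is a unique group morphism $\psi:\widetilde K\to K(\omega)$ with $\mathrm{ev}_\epsilon\circ\psi=p$ and $R(\omega)\circ\psi=(\psi\times\psi)\circ\widetilde R$.
   Context: $\{0,1\}^*$ denotes the finite words over $\{0,1\}$ with empty word $\epsilon$. $K(\omega)$ is the subgroup of $\prod_{u\in\{0,1\}^*}\Gamma$ (pointwise product) of maps $a:\{0,1\}^*\to\Gamma$ with $a(u)=\omega(a(u0),a(u1))$ for all $u$. $R(\omega)(a):=(R_0(a),R_1(a))$ where $R_i(a)(u):=a(iu)$. $\mathrm{ev}_\epsilon:K(\omega)\to\Gamma$, $a\mapsto a(\epsilon)$. *)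

(* Defs.v *)
From HB Require Import structures.
From mathcomp Require Import all_boot.
Set Implicit Arguments. Unset Strict Implicit. Unset Printing Implicit Defensive.
Local Open Scope group_scope.

(* finite words over {0,1}: 0 = false, 1 = true; u0 = rcons u false. *)
Definition word := seq bool.

Section K.
Variables (Gam : groupType) (om : Gam * Gam -> Gam).

Definition Kpred (a : word -> Gam) : Prop :=
  forall u : word, a u = om (a (rcons u false), a (rcons u true)).

Definition K : Type := {a : word -> Gam | Kpred a}.

Definition ev_eps (a : K) : Gam := proj1_sig a [::].

Lemma Kpred_shift (i : bool) (a : word -> Gam) :
  Kpred a -> Kpred (fun u => a (i :: u)).
Proof. by move=> Ha u; rewrite Ha. Qed.

Definition Ri (i : bool) (a : K) : K :=
  exist _ (fun u => proj1_sig a (i :: u)) (Kpred_shift i (proj2_sig a)).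

Definition R (a : K) : K * K := (Ri false a, Ri true a).

Definition omega_morph : Prop :=
  forall x y : Gam * Gam, om (x.1 * y.1, x.2 * y.2) = om x * om y.

Lemma Kpred_mul (hom : omega_morph) (a b : word -> Gam) :
  Kpred a -> Kpred b -> Kpred (fun u => a u * b u).
Proof. by move=> Ha Hb u; rewrite Ha Hb -hom. Qed.

Definition Kmul (hom : omega_morph) (a b : K) : K :=
  exist _ (fun u => proj1_sig a u * proj1_sig b u)
          (Kpred_mul hom (proj2_sig a) (proj2_sig b)).

End K.

(* Main.v *)
Require Import Defs.
From Stdlib Require Import ProofIrrelevance FunctionalExtensionality.
From HB Require Import structures.
From mathcomp Require Import all_boot.
Local Open Scope group_scope.

Lemma K_eq (Gam : groupType) (om : Gam * Gam -> Gam) (a b : K om) :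
  (forall u, proj1_sig a u = proj1_sig b u) -> a = b.
Proof.
case: a b => [f Hf] [g Hg] /= H.
have E : f = g by apply: functional_extensionality.
subst g; by rewrite (proof_irrelevance _ Hf Hg).
Qed.

Fixpoint walk {Kt : groupType} (Rt : Kt -> Kt * Kt) (u : word) (x : Kt) : Kt :=
  match u with
  | [::] => x
  | i :: u' => walk Rt u' (if i then (Rt x).2 else (Rt x).1)
  end.

Section Inv.
Variables (Gam : groupType) (om : Gam * Gam -> Gam).

Definition invf (b : K om * K om) (u : word) : Gam :=
  match u with
  | [::] => om (proj1_sig b.1 [::], proj1_sig b.2 [::])
  | i :: u' => proj1_sig (if i then b.2 else b.1) u'
  end.

Lemma invf_K b : Kpred om (invf b).
Proof.
case=> [|i u] //=.
case: i => /=; [exact: (proj2_sig b.2 u)|exact: (proj2_sig b.1 u)].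
Qed.

Definition invR (b : K om * K om) : K om := exist _ (invf b) (invf_K b).

Lemma walk_rcons (Kt : groupType) (Rt : Kt -> Kt * Kt) u i x :
  walk Rt (rcons u i) x = (if i then (Rt (walk Rt u x)).2 else (Rt (walk Rt u x)).1).
Proof. by elim: u x => [|j u IH] x //=. Qed.

Lemma walk_mul (Kt : groupType) (Rt : Kt -> Kt * Kt) :
  {morph Rt : x y / x * y >-> (x.1 * y.1, x.2 * y.2)} ->
  forall u x y, walk Rt u (x * y) = walk Rt u x * walk Rt u y.
Proof.
move=> HR; elim=> [|i u IH] x y //=.
by rewrite HR; case: i => /=; rewrite IH.
Qed.

End Inv.

Theorem mainTheorem11 (Gam : groupType) (om : Gam * Gam -> Gam)
  (hom : omega_morph om) :
  (* R(om) : K(om) -> K(om)^2 is a group isomorphism *)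
  ({morph @R Gam om : a b / Kmul hom a b >-> (Kmul hom a.1 b.1, Kmul hom a.2 b.2)}
   /\ bijective (@R Gam om)) /\
  (* ev_eps = om o (ev_eps x ev_eps) o R(om) *)
  (forall a : K om, ev_eps a = om (ev_eps (@R Gam om a).1, ev_eps (@R Gam om a).2)) /\
  (* universality *)
  (forall (Kt : groupType) (Rt : Kt -> Kt * Kt) (p : Kt -> Gam),
     {morph Rt : x y / x * y >-> (x.1 * y.1, x.2 * y.2)} ->
     bijective Rt ->
     {morph p : x y / x * y} ->
     (forall x : Kt, p x = om (p (Rt x).1, p (Rt x).2)) ->
     exists! psi : Kt -> K om,
       {morph psi : x y / x * y >-> Kmul hom x y} /\
       (forall x : Kt, ev_eps (psi x) = p x) /\
       (forall x : Kt, @R Gam om (psi x) = (psi (Rt x).1, psi (Rt x).2))).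
Proof.
split; [split|split].
- move=> a b; rewrite /R; congr pair; exact: K_eq.
- exists (@invR Gam om).
  + move=> a; apply: K_eq; case=> [|[] u] //=.
    by rewrite (proj2_sig a [::]).
  + case=> b0 b1; rewrite /R; congr pair; exact: K_eq.
- move=> a; exact: (proj2_sig a [::]).
- move=> Kt Rt p HR _ Hp Hpo.
  have Kp : forall x, Kpred om (fun u => p (walk Rt u x)).
    by move=> x u; rewrite !walk_rcons -Hpo.
  pose psi x : K om := exist _ (fun u => p (walk Rt u x)) (Kp x).
  exists psi; split.
  + split; [|split].
    * move=> x y; apply: K_eq => u /=; by rewrite walk_mul // Hp.
    * by [].
    * move=> x; rewrite /R; congr pair; exact: K_eq.
  + move=> psi' [_ [Hev HRR]].
    apply: functional_extensionality => x; apply: K_eq => u /=.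
    elim: u x => [|i u IH] x /=; first by rewrite -Hev.
    have := congr1 (fun q => proj1_sig (if i then q.2 else q.1) u) (HRR x).
    rewrite /R; case: i => /= ->; exact: IH.
Qed.
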